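(* Let $B,C$ be finite subsets of $I$. The following are equivalent: (1) there is a nonempty $A\in\mathcal{P}_{\mathrm{fci}}(I)$ with $l(A)=B$ and $r(A)=C$; (2) $B\neq\emptyset$, $\min(B\cup C)\subseteq B$, and one of the following holds: (a) $\max(B\cup C)\subseteq C$ and $\mathrm{ips}(B\cup C,C\setminus B)=B\setminus C$; (b) $\max(B\cup C)\subseteq B\setminus C$ and $\mathrm{ips}(B\cup C,C\setminus B)\cup\max(B\cup C)=B\setminus C$.
   Context: Let $I$ be a dense linear order with left endpoint $0$ and no right endpoint. Let $\mathcal{P}_{\mathrm{fci}}(I)$ be the set of finite unions of closed intervals $[i,j]$, $[i,+\infty)$, $(-\infty,j]$ of $I$. For $A\in\mathcal{P}_{\mathrm{fci}}(I)$, $l(A)$ and $r(A)$ are the sets of left and right endpoints of $A$. Left endpoints are the minima of the maximal closed intervals composing $A$, and right endpoints are the maxima of the bounded ones. For a nonempty finite set $X$, $\min(X)$ and $\max(X)$ are the singletons of its least and greatest element. For finite $X,Y$, $\mathrm{ips}(X,Y)=\{i\in X: s_X(i)\in Y\}$, where $s_X$ is the successor function of $X$ with the induced order. *)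

(* Defs.v *)
From Stdlib Require Import List.
From HB Require Import structures.
From mathcomp Require Import all_boot all_order.
From mathcomp Require Import boolp classical_sets cardinality.
Set Implicit Arguments. Unset Strict Implicit. Unset Printing Implicit Defensive.
Import Order.TTheory.
Local Open Scope order_scope.
Local Open Scope classical_set_scope.

Inductive cinterval (T : Type) :=
  | CIcc of T & T
  | CIci of T
  | CIic of T.

Section Fci.
Context {d : Order.disp_t} {I : orderType d}.

Definition cint_set (c : cinterval I) : set I :=
  match c with
  | CIcc i j => [set x | i <= x /\ x <= j]
  | CIci i => [set x | i <= x]
  | CIic j => [set x | x <= j]
  end.

Definition is_fci (A : set I) : Prop :=
  exists s : list (cinterval I),
    A = [set x | exists c, In c s /\ cint_set c x].

Definition is_closed_interval (J : set I) : Prop :=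
  J !=set0 /\ exists c : cinterval I, J = cint_set c.

Definition maximal_ci (A J : set I) : Prop :=
  is_closed_interval J /\ J `<=` A /\
  forall K, is_closed_interval K -> J `<=` K -> K `<=` A -> K = J.

Definition is_least (X : set I) (m : I) : Prop := X m /\ forall y, X y -> m <= y.
Definition is_greatest (X : set I) (m : I) : Prop := X m /\ forall y, X y -> y <= m.

Definition lends (A : set I) : set I :=
  [set m | exists J, maximal_ci A J /\ is_least J m].
Definition rends (A : set I) : set I :=
  [set m | exists J, maximal_ci A J /\ is_greatest J m].

Definition setmin (X : set I) : set I := [set m | is_least X m].
Definition setmax (X : set I) : set I := [set m | is_greatest X m].

Definition succ_in (X : set I) (i j : I) : Prop :=
  X i /\ X j /\ i < j /\ forall k, X k -> i < k -> j <= k.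

Definition ips (X Y : set I) : set I :=
  [set i | X i /\ exists j, succ_in X i j /\ Y j].

End Fci.

(* Main.v *)
Require Import Defs.
From Stdlib Require Import List.
From HB Require Import structures.
From mathcomp Require Import all_boot all_order.
From mathcomp Require Import boolp classical_sets cardinality.
From mathcomp Require Import zify.
Import Order.TTheory.
Local Open Scope order_scope.
Local Open Scope classical_set_scope.

Section Aux.
Context {d : Order.disp_t} {I : orderType d} (o : I)
  (o_bot : forall x : I, o <= x)
  (dense : forall x y : I, x < y -> exists z, x < z /\ z < y)
  (no_top : forall x : I, exists y, x < y).

Definition Aof (s : list (cinterval I)) : set I :=
  [set x | exists c, In c s /\ cint_set c x].
Definition ends (c : cinterval I) : seq I :=
  match c with CIcc i j => [:: i; j] | CIci i => [:: i] | CIic j => [:: j] end.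
Definition Es (s : list (cinterval I)) : seq I := o :: flatten (map ends s).

Definition LGap (A : set I) (x : I) := exists y, y < x /\ forall z, y < z -> z < x -> ~ A z.
Definition RGap (A : set I) (x : I) := exists y, x < y /\ forall z, x < z -> z < y -> ~ A z.
Definition LG (A : set I) (x : I) := x = o \/ LGap A x.

Lemma cint_convex (c : cinterval I) (u w z : I) : cint_set c u -> cint_set c w -> u <= z -> z <= w ->
  cint_set c z.
Proof.
case: c => [i j|i|j] /=.
- move=> [h1 _] [_ h2] uz zw; split; [exact: le_trans h1 uz|exact: le_trans zw h2].
- move=> h1 _ uz _; exact: le_trans h1 uz.
- move=> _ h2 _ zw; exact: le_trans zw h2.
Qed.

Lemma dense2 {a b x : I} : a < x -> b < x -> exists z, a < z /\ b < z /\ z < x.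
Proof.
move=> ax bx; case: (leP a b) => ab.
- have [z [bz zx]] := dense _ _ bx; exists z; split; [exact: le_lt_trans ab bz|by []].
- have [z [az zx]] := dense _ _ ax; exists z; split; [by []|split; [exact: lt_trans ab az|by []]].
Qed.

Lemma dense2r {a b x : I} : x < a -> x < b -> exists z, x < z /\ z < a /\ z < b.
Proof.
move=> xa xb; case: (leP a b) => ab.
- have [z [xz za]] := dense _ _ xa; exists z; split; [by []|split; [by []|exact: lt_le_trans za ab]].
- have [z [xz zb]] := dense _ _ xb; exists z; split; [by []|split; [exact: lt_trans zb ab|by []]].
Qed.

Lemma count_lt_strict {T : eqType} (a b : pred T) (s : seq T) y :
  subpred a b -> y \in s -> b y -> ~~ a y -> (count a s < count b s)%N.
Proof.
move=> sab + hby nay; elim: s => [//|e s IH]; rewrite inE => /orP [/eqP <- | ys] /=.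
- have := sub_count sab s; rewrite (negbTE nay) hby /=; lia.
- have := IH ys; case ae: (a e); first by rewrite (sab _ ae) /=; lia.
  case: (b e) => /=; lia.
Qed.

Lemma mem_Es s (c : cinterval I) (y : I) : In c s -> y \in ends c -> y \in Es s.
Proof.
rewrite /Es inE => hc hy; apply/orP; right.
elim: s hc => [//|c' s IH] /= [->|hc]; rewrite mem_cat ?hy //.
by rewrite IH ?orbT.
Qed.


Lemma ltF {x y : I} : x < y -> y <= x -> False.
Proof. by move=> h1 h2; have := lt_le_trans h1 h2; rewrite ltxx. Qed.

Lemma LD_int (c : cinterval I) (x : I) : o < x ->
  (exists y, y \in o :: ends c /\ y < x /\ forall z, y <= z -> z <= x -> cint_set c z) \/
  (exists y, y < x /\ forall z, y < z -> z < x -> ~ cint_set c z).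
Proof.
move=> ox; case: c => [i j|i|j] /=.
- case: (leP x i) => xi.
    right; exists o; split => // z _ zx [iz _]; exact: ltF (lt_le_trans zx xi) iz.
  case: (leP x j) => xj.
    left; exists i; rewrite !inE eqxx orbT; split => //; split => // z iz zx.
    split => //; exact: le_trans zx xj.
  right; exists j; split => // z jz _ [_ zj]; exact: ltF jz zj.
- case: (leP x i) => xi.
    right; exists o; split => // z _ zx iz; exact: ltF (lt_le_trans zx xi) iz.
  left; exists i; rewrite !inE eqxx orbT; split => //.
- case: (leP x j) => xj.
    left; exists o; rewrite !inE eqxx; split => //; split => // z _ zx.
    exact: le_trans zx xj.
  right; exists j; split => // z jz _ zj; exact: ltF jz zj.
Qed.

Lemma LD_list (s : list (cinterval I)) (x : I) : o < x ->
  (exists c y, In c s /\ y \in o :: ends c /\ y < x /\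
     forall z, y <= z -> z <= x -> cint_set c z) \/
  (exists y, y < x /\ forall z, y < z -> z < x -> ~ Aof s z).
Proof.
move=> ox; elim: s => [|c s IH].
  by right; exists o; split => // z _ _ [c [[]]].
case: (LD_int c x ox) => [[y [h1 [h2 h3]]]|[y1 [y1x h1]]].
  by left; exists c, y; split; [left|].
case: IH => [[c' [y [h0 [h1' [h2 h3]]]]]|[y2 [y2x h2]]].
  by left; exists c', y; split; [right|].
right; case: (leP y1 y2) => y12.
- exists y2; split => // z zy zx [c' [[<-|hc] hz]].
  + exact: h1 (le_lt_trans y12 zy) zx hz.
  + by apply: (h2 z zy zx); exists c'.
- exists y1; split => // z zy zx [c' [[<-|hc] hz]].
  + exact: h1 zy zx hz.
  + by apply: (h2 z (lt_trans y12 zy) zx); exists c'.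
Qed.

Lemma mem_Es' s (c : cinterval I) (y : I) : In c s -> y \in o :: ends c -> y \in Es s.
Proof.
move=> hc; rewrite inE => /orP [/eqP ->|hy]; first by rewrite inE eqxx.
exact: mem_Es hc hy.
Qed.

Lemma LD (s : list (cinterval I)) (x : I) :
  x = o \/ LGap (Aof s) x \/
  exists y, y \in Es s /\ y < x /\ forall z, y <= z -> z <= x -> Aof s z.
Proof.
have := o_bot x; rewrite le_eqVlt => /orP [/eqP ->|ox]; first by left.
right; case: (LD_list s x ox) => [[c [y [hc [hy [yx h]]]]]|[y [yx h]]].
- right; exists y; split; first exact: mem_Es' hc hy.
  split => // z yz zx; exists c; split => //; exact: h.
- by left; exists y.
Qed.

Lemma RD_int (c : cinterval I) (x : I) :
  (exists y, y \in ends c /\ x < y /\ forall z, x <= z -> z <= y -> cint_set c z) \/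
  (forall z, x <= z -> cint_set c z) \/
  (exists y, x < y /\ forall z, x < z -> z < y -> ~ cint_set c z).
Proof.
case: c => [i j|i|j] /=.
- case: (ltP x i) => xi.
    right; right; exists i; split => // z _ zi [iz _]; exact: ltF zi iz.
  case: (ltP x j) => xj.
    left; exists j; rewrite !inE eqxx orbT; split => //; split => // z xz zj.
    split => //; exact: le_trans xi xz.
  have [y xy] := no_top x.
  right; right; exists y; split => // z xz _ [_ zj]; exact: ltF (le_lt_trans xj xz) zj.
- case: (ltP x i) => xi.
    right; right; exists i; split => // z _ zi iz; exact: ltF zi iz.
  right; left => z xz; exact: le_trans xi xz.
- case: (ltP x j) => xj.
    left; exists j; rewrite !inE eqxx; split => //; split => // z _ zj.
  have [y xy] := no_top x.
  right; right; exists y; split => // z xz _ zj; exact: ltF (le_lt_trans xj xz) zj.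
Qed.

Lemma RD (s : list (cinterval I)) (x : I) :
  RGap (Aof s) x \/ (forall z, x <= z -> Aof s z) \/
  exists y, y \in Es s /\ x < y /\ forall z, x <= z -> z <= y -> Aof s z.
Proof.
elim: s => [|c s IH].
  by have [y xy] := no_top x; left; exists y; split => // z _ _ [c [[]]].
case: (RD_int c x) => [[y [hy [xy h]]]|[h|[y1 [xy1 h1]]]].
- right; right; exists y; split; first by apply: (@mem_Es (c :: s) c) => //; left.
  split => // z xz zy; exists c; split; [by left|exact: h].
- by right; left => z xz; exists c; split; [left|exact: h].
case: IH => [[y2 [xy2 h2]]|[h|[y [hy [xy h]]]]].
- left; case: (leP y1 y2) => y12.
  + exists y1; split => // z xz zy [c' [[<-|hc] hz]].
    * exact: h1 xz zy hz.
    * by apply: (h2 z xz (lt_le_trans zy y12)); exists c'.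
  + exists y2; split => // z xz zy [c' [[<-|hc] hz]].
    * exact: h1 xz (lt_trans zy y12) hz.
    * by apply: (h2 z xz zy); exists c'.
- right; left => z xz; have [c' [hc hz]] := h z xz; exists c'; split => //; by right.
- right; right; exists y; split.
    by move: hy; rewrite /Es !inE /= mem_cat => /orP [->|->]; rewrite ?orbT.
  split => // z xz zy; have [c' [hc hz]] := h z xz zy; exists c'; split => //; by right.
Qed.


Lemma le_antiP {x z : I} : x <= z -> z <= x -> z = x.
Proof. by move=> h1 h2; apply/le_anti; rewrite h1 h2. Qed.

Lemma LE (s : list (cinterval I)) (x : I) : Aof s x ->
  exists l, l <= x /\ (forall z, l <= z -> z <= x -> Aof s z) /\ LG (Aof s) l.
Proof.
suff H : forall (n : nat) (x : I), (count (fun e : I => (e < x)%O) (Es s) < n)%N -> Aof s x ->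
  exists l, l <= x /\ (forall z, l <= z -> z <= x -> Aof s z) /\ LG (Aof s) l.
  exact: (H _ x (ltnSn _)).
elim=> [//|n IH] {}x hn Ax.
have triv : forall z, x <= z -> z <= x -> Aof s z by move=> z h1 h2; rewrite (le_antiP h1 h2).
case: (LD s x) => [xo|[gap|[y [hy [yx h]]]]].
- by exists x; split => //; split => //; left.
- by exists x; split => //; split => //; right.
have hc : (count (fun e : I => (e < y)%O) (Es s) < count (fun e : I => (e < x)%O) (Es s))%N.
  refine (count_lt_strict _ _ _ y _ hy yx _); last by rewrite ltxx.
  by move=> e /= ey; exact: lt_trans ey yx.
have [l [ly [hl lgl]]] := IH y (leq_trans hc (hn : _ <= n)%N) (h y (lexx y) (ltW yx)).
exists l; split; first exact: le_trans ly (ltW yx).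
split => // z lz zx; case: (leP z y) => zy; first exact: hl.
exact: h (ltW zy) zx.
Qed.

Lemma RE (s : list (cinterval I)) (x : I) : Aof s x ->
  (forall z, x <= z -> Aof s z) \/
  exists r, x <= r /\ (forall z, x <= z -> z <= r -> Aof s z) /\ RGap (Aof s) r.
Proof.
suff H : forall (n : nat) (x : I), (count (fun e : I => (x < e)%O) (Es s) < n)%N -> Aof s x ->
  (forall z, x <= z -> Aof s z) \/
  exists r, x <= r /\ (forall z, x <= z -> z <= r -> Aof s z) /\ RGap (Aof s) r.
  exact: (H _ x (ltnSn _)).
elim=> [//|n IH] {}x hn Ax.
have triv : forall z, x <= z -> z <= x -> Aof s z by move=> z h1 h2; rewrite (le_antiP h1 h2).
case: (RD s x) => [gap|[hall|[y [hy [xy h]]]]].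
- by right; exists x; split => //.
- by left.
have hc : (count (fun e : I => (y < e)%O) (Es s) < count (fun e : I => (x < e)%O) (Es s))%N.
  refine (count_lt_strict _ _ _ y _ hy xy _); last by rewrite ltxx.
  by move=> e /= ey; exact: lt_trans xy ey.
case: (IH y (leq_trans hc (hn : _ <= n)%N) (h y (ltW xy) (lexx y))) =>
  [hall|[r [yr [hr gr]]]].
- left => z xz; case: (leP z y) => zy; first exact: h.
  exact: hall (ltW zy).
- right; exists r; split; first exact: le_trans (ltW xy) yr.
  split => // z xz zr; case: (leP z y) => zy; first exact: h.
  exact: hr (ltW zy) zr.
Qed.


Lemma max_ext (A J K : set I) (y : I) : maximal_ci A J -> is_closed_interval K ->
  J `<=` K -> K `<=` A -> K y -> J y.
Proof. by move=> [_ [_ hm]] hK JK KA Ky; rewrite -(hm K hK JK KA). Qed.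

Lemma left_bound (A : set I) (c : cinterval I) (x w : I) : cint_set c `<=` A ->
  cint_set c x -> LG A x -> cint_set c w -> x <= w.
Proof.
move=> KA Kx [xo|[y [yx gap]]] Kw; first by rewrite xo.
case: (leP x w) => // wx; exfalso.
have [z [yz [wz zx]]] := dense2 yx wx.
apply: (gap z yz zx); apply: KA; exact: cint_convex Kw Kx (ltW wz) (ltW zx).
Qed.

Lemma right_bound (A : set I) (c : cinterval I) (r w : I) : cint_set c `<=` A ->
  cint_set c r -> RGap A r -> cint_set c w -> w <= r.
Proof.
move=> KA Kr [y [ry gap]] Kw.
case: (leP w r) => // rw; exfalso.
have [z [rz [zy zw]]] := dense2r ry rw.
apply: (gap z rz zy); apply: KA; exact: cint_convex Kr Kw (ltW rz) (ltW zw).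
Qed.

Lemma ci_nonempty (c : cinterval I) (y : I) : cint_set c y -> is_closed_interval (cint_set c).
Proof. by move=> h; split; [exists y|exists c]. Qed.

Lemma max_ext' (A J : set I) (c : cinterval I) (y : I) : maximal_ci A J ->
  J `<=` cint_set c -> cint_set c `<=` A -> cint_set c y -> J y.
Proof. move=> hJ JK KA Ky; exact: max_ext hJ (ci_nonempty _ _ Ky) JK KA Ky. Qed.

Lemma lends_char (s : list (cinterval I)) (x : I) :
  lends (Aof s) x <-> Aof s x /\ LG (Aof s) x.
Proof.
split.
- move=> [J [hJ [Jx Jl]]]; have Ax : Aof s x by apply: hJ.2.1.
  split => //; have [//|nLG] := pselect (LG (Aof s) x); exfalso.
  have [y [yx hy]] : exists y, y < x /\ forall z, y <= z -> z <= x -> Aof s z.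
    case: (LD s x) => [xo|[gap|[y [_ [yx h]]]]]; [by case: nLG; left|by case: nLG; right|].
    by exists y.
  have [_ [c Jc]] := hJ.1; subst J; move: hJ Jx Jl.
  case: c => [i j|i|j] hJ /= Jx Jl.
  + have Jy : cint_set (CIcc i j) y.
    { apply: (max_ext' _ _ (CIcc y j) y hJ).
      * move=> z /= [iz zj]; split => //; exact: le_trans (ltW yx) (Jl z (conj iz zj)).
      * move=> z /= [yz zj]; case: (leP z x) => zx; first exact: hy.
        apply: hJ.2.1 => /=; split => //; exact: le_trans Jx.1 (ltW zx).
      * split; [exact: lexx|exact: le_trans (ltW yx) Jx.2]. }
    by have := Jl y Jy; move/(ltF yx).
  + have Jy : cint_set (CIci i) y.
    { apply: (max_ext' _ _ (CIci y) y hJ).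
      * move=> z /= iz; exact: le_trans (ltW yx) (Jl z iz).
      * move=> z /= yz; case: (leP z x) => zx; first exact: hy.
        apply: hJ.2.1 => /=; exact: le_trans Jx (ltW zx).
      * exact: lexx. }
    by have := Jl y Jy; move/(ltF yx).
  + have := Jl o (le_trans (o_bot x) Jx) => xo.
    by apply: nLG; left; apply: le_antiP.
- move=> [Ax hLG]; case: (RE s x Ax) => [hall|[r [xr [hr gr]]]].
  + exists (cint_set (CIci x)); split; last by split => //= y.
    split; first exact: (ci_nonempty (CIci x) x (lexx x)).
    split; first by move=> z /= xz; exact: hall.
    move=> K [_ [cK ->]] JK KA; rewrite eqEsubset; split => // w Kw /=.
    exact: left_bound KA (JK x (lexx x)) hLG Kw.
  + exists (cint_set (CIcc x r)); split; last by split => //= y [].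
    split; first by apply: (ci_nonempty (CIcc x _) x); split; [exact: lexx|].
    split; first by move=> z /= [xz zr]; exact: hr.
    move=> K [_ [cK ->]] JK KA; rewrite eqEsubset; split => // w Kw /=.
    split; first exact: left_bound KA (JK x (conj (lexx x) xr)) hLG Kw.
    exact: right_bound KA (JK r (conj xr (lexx r))) gr Kw.
Qed.

Lemma rends_char (s : list (cinterval I)) (x : I) :
  rends (Aof s) x <-> Aof s x /\ RGap (Aof s) x.
Proof.
split.
- move=> [J [hJ [Jx Jg]]]; have Ax : Aof s x by apply: hJ.2.1.
  split => //; have [//|nG] := pselect (RGap (Aof s) x); exfalso.
  have [y [xy hy]] : exists y, x < y /\ forall z, x <= z -> z <= y -> Aof s z.
    case: (RD s x) => [gap|[hall|[y [_ [xy h]]]]]; [by case: nG| |by exists y].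
    have [y xy] := no_top x; exists y; split => // z xz _; exact: hall.
  have [_ [c Jc]] := hJ.1; subst J; move: hJ Jx Jg.
  case: c => [i j|i|j] hJ /= Jx Jg.
  + have Jy : cint_set (CIcc i j) y.
    { apply: (max_ext' _ _ (CIcc i y) y hJ).
      * move=> z /= [iz zj]; split => //; exact: le_trans (Jg z (conj iz zj)) (ltW xy).
      * move=> z /= [iz zy]; case: (leP z x) => zx; last exact: hy (ltW zx) zy.
        apply: hJ.2.1 => /=; split => //; exact: le_trans zx Jx.2.
      * split; [exact: le_trans Jx.1 (ltW xy)|exact: lexx]. }
    by have := Jg y Jy; move/(ltF xy).
  + have [y' xy'] := no_top x.
    by have := Jg y' (le_trans Jx (ltW xy')); move/(ltF xy').
  + have Jy : cint_set (CIic j) y.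
    { apply: (max_ext' _ _ (CIic y) y hJ).
      * move=> z /= zj; exact: le_trans (Jg z zj) (ltW xy).
      * move=> z /= zy; case: (leP z x) => zx; last exact: hy (ltW zx) zy.
        apply: hJ.2.1 => /=; exact: le_trans zx Jx.
      * exact: lexx. }
    by have := Jg y Jy; move/(ltF xy).
- move=> [Ax gx]; have [l [lx [hl hLG]]] := LE s x Ax.
  exists (cint_set (CIcc l x)); split; last by split => //= y [].
  split; first by apply: (ci_nonempty (CIcc l x) x); split; [exact: lx|exact: lexx].
  split; first by move=> z /= [lz zx]; exact: hl.
  move=> K [_ [cK ->]] JK KA; rewrite eqEsubset; split => // w Kw /=.
  split; first exact: left_bound KA (JK l (conj (lexx l) lx)) hLG Kw.
  exact: right_bound KA (JK x (conj lx (lexx x))) gx Kw.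
Qed.


Definition cond2 (B C : set I) : Prop :=
  B !=set0 /\ setmin (B `|` C) `<=` B /\
   ((setmax (B `|` C) `<=` C /\ ips (B `|` C) (C `\` B) = B `\` C) \/
    (setmax (B `|` C) `<=` B `\` C /\
     ips (B `|` C) (C `\` B) `|` setmax (B `|` C) = B `\` C)).

Lemma succ_uniq {X : set I} {a b c : I} : succ_in X a c -> succ_in X b c -> a = b.
Proof.
move=> [Xa [_ [ac ha]]] [Xb [_ [bc hb]]].
case: (ltgtP a b) => // h; exfalso.
- exact: ltF bc (ha b Xb h).
- exact: ltF ac (hb a Xa h).
Qed.

Lemma dir1 (s : list (cinterval I)) (B C : set I) :
  (forall x, B x <-> Aof s x /\ LG (Aof s) x) ->
  (forall x, C x <-> Aof s x /\ RGap (Aof s) x) ->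
  Aof s !=set0 -> cond2 B C.
Proof.
move=> hB hC [a Aa]; set A := Aof s; set X := B `|` C.
have notLG : forall b z, b < z -> (forall w, b <= w -> w <= z -> A w) -> ~ LG A z.
  move=> b z bz hw [zo|[y [yz gap]]].
    by rewrite zo in bz; have := o_bot b; move/(ltF bz).
  have [w [yw [bw wz]]] := dense2 yz bz.
  exact: (gap w yw wz) (hw w (ltW bw) (ltW wz)).
have notRG : forall z r, z < r -> (forall w, z <= w -> w <= r -> A w) -> ~ RGap A z.
  move=> z r zr hw [y [zy gap]].
  have [w [zw [wy wr]]] := dense2r zy zr.
  exact: (gap w zw wy) (hw w (ltW zw) (ltW wr)).
have notRGinf : forall z, (forall w, z <= w -> A w) -> ~ RGap A z.
  move=> z hw [y [zy gap]]; have [w [zw wy]] := dense _ _ zy.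
  exact: (gap w zw wy) (hw w (ltW zw)).
have interior : forall b r z, (forall w, b <= w -> w <= r -> A w) -> b < z -> z < r -> ~ X z.
  move=> b r z hw bz zr [/hB [_ hl]|/hC [_ hr]].
  - apply: (notLG b z bz) => // w bw wz; apply: hw => //; exact: le_trans wz (ltW zr).
  - apply: (notRG z r zr) => // w zw wr; apply: hw => //; exact: le_trans (ltW bz) zw.
have interior_inf : forall b z, (forall w, b <= w -> A w) -> b < z -> ~ X z.
  move=> b z hw bz [/hB [_ hl]|/hC [_ hr]].
  - by apply: (notLG b z bz) => // w bw _; apply: hw.
  - apply: (notRGinf z) => // w zw; apply: hw; exact: le_trans (ltW bz) zw.
have S1 : forall b, B b -> ~ C b ->
    (exists r, succ_in X b r /\ C r /\ ~ B r) \/ is_greatest X b.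
  move=> b Bb nCb; have Ab := (proj1 (hB b) Bb).1.
  case: (RE s b Ab) => [hall|[r [br [hr gr]]]].
  - right; split; first by left.
    move=> y Xy; case: (leP y b) => // by_; exfalso; exact: interior_inf hall by_ Xy.
  - have br' : b < r.
      rewrite lt_neqAle br andbT; apply/eqP => ebr; apply: nCb; apply/hC.
      by rewrite ebr; split => //; apply: hr.
    left; exists r; split; last split.
    + split; first by left.
      split; first by right; apply/hC; split => //; apply: hr.
      split => // k Xk bk; case: (leP r k) => // kr; exfalso.
      exact: interior hr bk kr Xk.
    + by apply/hC; split => //; apply: hr.
    + move=> /hB [_ hl]; exact: notLG b r br' (fun w h1 h2 => hr w h1 h2) hl.
  have S2 : forall c, C c -> ~ B c -> exists l, succ_in X l c /\ B l /\ ~ C l.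
  move=> c Cc nBc; have Ac := (proj1 (hC c) Cc).1.
  have [l [lc [hl gl]]] := LE s c Ac.
  have lc' : l < c.
    rewrite lt_neqAle lc andbT; apply/eqP => elc; apply: nBc; apply/hB.
    by rewrite -elc; split => //; apply: hl.
  have Bl : B l by apply/hB; split => //; apply: hl.
  exists l; split; last split => //.
  - split; first by left.
    split; first by right.
    split => // k Xk lk; case: (leP c k) => // kc; exfalso.
    exact: interior hl lk kc Xk.
  - move=> /hC [_ hr]; exact: notRG l c lc' hl hr.
have ipsBC : ips X (C `\` B) `<=` B `\` C.
  move=> i [Xi [j [sij [Cj nBj]]]]; have [l [slj [Bl nCl]]] := S2 j Cj nBj.
  by rewrite (succ_uniq sij slj).
split.
  have [l [lx [hl gl]]] := LE s a Aa; exists l; apply/hB; split => //.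
  by apply: hl.
split.
  move=> m [Xm lm]; case: Xm => [//|Cm].
  have Am := (proj1 (hC m) Cm).1.
  have [l [lm' [hl gl]]] := LE s m Am.
  have Bl : B l by apply/hB; split => //; apply: hl.
  by have := lm l (or_introl Bl) => ml; rewrite -(le_antiP ml lm').
case: (pselect (exists m, setmax X m /\ ~ C m)) => [[m [[Xm gm] nCm]]|nex].
- right; have Bm : B m by case: Xm.
  have smax : setmax X `<=` B `\` C.
    move=> m' [Xm' gm']; have -> : m' = m by apply: le_antiP; [apply: gm'|apply: gm].
    by split.
  split => //; rewrite eqEsubset; split.
    by move=> x [/ipsBC|/smax].
  move=> b [Bb nCb]; case: (S1 b Bb nCb) => [[r [sbr [Cr nBr]]]|gb].
  + by left; split; [left|exists r].
  + by right.
- left; have smax : setmax X `<=` C.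
    move=> m hm; have [//|nC] := pselect (C m); exfalso; apply: nex; by exists m.
  split => //; rewrite eqEsubset; split => // b [Bb nCb].
  case: (S1 b Bb nCb) => [[r [sbr [Cr nBr]]]|gb].
  + by split; [left|exists r].
  + by exfalso; apply: nCb; apply: smax.
Qed.


Lemma In_cat {T : Type} (y : T) (s1 s2 : seq T) : In y (s1 ++ s2) <-> In y s1 \/ In y s2.
Proof. elim: s1 => [|a s1 IH] /=; [tauto|rewrite IH; tauto]. Qed.

Lemma In_map {T : eqType} {U : Type} (f : T -> U) (y : U) (s : seq T) :
  In y (map f s) <-> exists x, x \in s /\ y = f x.
Proof.
elim: s => [|a s IH] /=; first by split => // [[x []]].
rewrite IH; split.
- move=> [<-|[x [xs ->]]]; first by exists a; rewrite mem_head.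
  by exists x; rewrite inE xs orbT.
- move=> [x]; rewrite inE => [[/orP [/eqP ->|xs] ->]]; first by left.
  by right; exists x.
Qed.

Lemma seq_greatest {t : seq I} {x : I} : x \in t -> exists m, m \in t /\ forall y, y \in t -> y <= m.
Proof.
elim: t x => [//|a t IH] x _; case: t IH => [|b t] IH.
  by exists a; split; [rewrite mem_head|move=> y; rewrite inE => /eqP ->].
have [m [mt hm]] := IH b (mem_head _ _).
case: (leP a m) => am.
- exists m; split; first by rewrite inE mt orbT.
  by move=> y; rewrite inE => /orP [/eqP ->|/hm].
- exists a; split; first by rewrite mem_head.
  move=> y; rewrite inE => /orP [/eqP ->|/hm ym]; first exact: lexx.
  exact: le_trans ym (ltW am).
Qed.

Lemma seq_least {t : seq I} {x : I} : x \in t -> exists m, m \in t /\ forall y, y \in t -> m <= y.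
Proof.
elim: t x => [//|a t IH] x _; case: t IH => [|b t] IH.
  by exists a; split; [rewrite mem_head|move=> y; rewrite inE => /eqP ->].
have [m [mt hm]] := IH b (mem_head _ _).
case: (leP m a) => am.
- exists m; split; first by rewrite inE mt orbT.
  by move=> y; rewrite inE => /orP [/eqP ->|/hm].
- exists a; split; first by rewrite mem_head.
  move=> y; rewrite inE => /orP [/eqP ->|/hm ym]; first exact: lexx.
  exact: le_trans (ltW am) ym.
Qed.

Lemma fin_greatest {S : set I} : finite_set S -> S !=set0 -> exists m, is_greatest S m.
Proof.
move=> /finite_seqP [t ->] [x xt]; have [m [mt hm]] := seq_greatest xt.
by exists m; split.
Qed.

Lemma fin_least {S : set I} : finite_set S -> S !=set0 -> exists m, is_least S m.
Proof.
move=> /finite_seqP [t ->] [x xt]; have [m [mt hm]] := seq_least xt.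
by exists m; split.
Qed.


Lemma dir2 (B C : set I) : finite_set B -> finite_set C -> cond2 B C ->
  exists A : set I, is_fci A /\ A !=set0 /\ lends A = B /\ rends A = C.
Proof.
move=> fB fC [[b0 Bb0] [hmin hcase]].
set X := B `|` C.
have fX : finite_set X by rewrite /X finite_setU.
have Hpred : forall c, C c -> ~ B c -> exists p, succ_in X p c /\ B p /\ ~ C p.
  move=> c Cc nBc.
  have [m0 [Xm0 lm0]] := fin_least fX (ex_intro _ b0 (or_introl Bb0)).
  have Bm0 : B m0 by apply: hmin; split.
  have m0c : m0 < c.
    rewrite lt_neqAle (lm0 c (or_intror Cc)) andbT; apply/eqP => e.
    by apply: nBc; rewrite -e.
  have fP : finite_set [set z | X z /\ z < c].
    by apply: sub_finite_set fX => z [].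
  have [p [[Xp pc] gp]] := fin_greatest fP (ex_intro _ m0 (conj Xm0 m0c)).
  have spc : succ_in X p c.
    split => //; split; first by right.
    split => // k Xk pk; case: (leP c k) => // kc; exfalso.
    exact: ltF pk (gp k (conj Xk kc)).
  have ipsp : ips X (C `\` B) p by split => //; exists c.
  have : (B `\` C) p.
    by case: hcase => [[_ <-]|[_ <-]] //; left.
  by move=> [Bp nCp]; exists p.
have Hsucc : forall b, B b -> ~ C b ->
    (exists c, succ_in X b c /\ C c /\ ~ B c) \/ is_greatest X b.
  move=> b Bb nCb; have : (B `\` C) b by [].
  case: hcase => [[_ <-]|[_ <-]].
  - by move=> [_ [c [sbc [Cc nBc]]]]; left; exists c.
  - move=> [[_ [c [sbc [Cc nBc]]]]|gb]; [by left; exists c|by right].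
have [sB hsB] := (iffLR (finite_seqP B)) fB.
have [sC hsC] := (iffLR (finite_seqP C)) fC.
pose good b c := B b /\ C c /\ (b = c \/ (succ_in X b c /\ ~ C b /\ ~ B c)).
pose goodm m := B m /\ ~ C m /\ is_greatest X m.
pose s := [seq CIcc p.1 p.2 | p <- [seq p <- [seq (x, y) | x <- sB, y <- sC] |
              `[< good p.1 p.2 >]]] ++
          [seq CIci m | m <- [seq m <- sB | `[< goodm m >]]].
have Achar : forall x, Aof s x <->
    (exists b c, good b c /\ b <= x /\ x <= c) \/ (exists m, goodm m /\ m <= x).
  move=> x; split.
  - move=> [c0 [/In_cat [/In_map [p [hp ->]]|/In_map [m [hm ->]]] hx]].
    + left; exists p.1, p.2; move: hp; rewrite mem_filter => /andP [/asboolP gp _].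
      by split.
    + right; exists m; move: hm; rewrite mem_filter => /andP [/asboolP gm _].
      by split.
  - move=> [[b [c [gbc [bx xc]]]]|[m [gm mx]]].
    + exists (CIcc b c); split => //; apply/In_cat; left; apply/In_map.
      exists (b, c); split => //; rewrite mem_filter; apply/andP; split.
        by apply/asboolP.
      apply/allpairsP; exists (b, c); split => //=.
      * by have := gbc.1; rewrite hsB.
      * by have := gbc.2.1; rewrite hsC.
    + exists (CIci m); split => //; apply/In_cat; right; apply/In_map.
      exists m; split => //; rewrite mem_filter; apply/andP; split.
        by apply/asboolP.
      by have := gm.1; rewrite hsB.
have inA_int : forall b c w, good b c -> b <= w -> w <= c -> Aof s w.
  by move=> b c w gbc bw wc; apply/Achar; left; exists b, c.
have inA_inf : forall m w, goodm m -> m <= w -> Aof s w.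
  by move=> m w gm mw; apply/Achar; right; exists m.
have memB : forall b, B b -> Aof s b.
  move=> b Bb; case: (pselect (C b)) => [Cb|nCb].
    by apply: (inA_int b b) => //; split => //; split => //; left.
  case: (Hsucc b Bb nCb) => [[c [sbc [Cc nBc]]]|gb].
  - apply: (inA_int b c) => //; last exact: ltW sbc.2.2.1.
    by split => //; split => //; right.
  - by apply: (inA_inf b) => //; split.
have memC : forall c, C c -> Aof s c.
  move=> c Cc; case: (pselect (B c)) => [Bc|nBc].
    by apply: (inA_int c c) => //; split => //; split => //; left.
  have [p [spc [Bp nCp]]] := Hpred c Cc nBc.
  apply: (inA_int p c) => //; last exact: ltW spc.2.2.1.
  by split => //; split => //; right.
exists (Aof s); split; first by exists s.
split; first by exists b0; apply: memB.
split; rewrite eqEsubset; split => x.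
- move=> /lends_char [/Achar Ax hLG].
  case: Ax => [[b [c [[Bb [Cc hbc]] [bx xc]]]]|[m [[Bm gm] mx]]].
  + move: bx; rewrite le_eqVlt => /orP [/eqP <- //|bx]; exfalso.
    case: hLG => [xo|[y [yx gap]]].
      by move: bx; rewrite xo => bo; exact: ltF bo (o_bot b).
    have [w [yw [bw wx]]] := dense2 yx bx.
    apply: (gap w yw wx); apply: (inA_int b c) => //; first exact: ltW bw.
    exact: le_trans (ltW wx) xc.
  + move: mx; rewrite le_eqVlt => /orP [/eqP <- //|mx]; exfalso.
    case: hLG => [xo|[y [yx gap]]].
      by move: mx; rewrite xo => mo; exact: ltF mo (o_bot m).
    have [w [yw [mw wx]]] := dense2 yx mx.
    apply: (gap w yw wx); apply: (inA_inf m) => //; exact: ltW mw.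
- move=> Bx; apply/lends_char; split; first exact: memB.
  case: (pselect (exists z, X z /\ z < x)) => [[z0 [Xz0 z0x]]|no].
  + have fP : finite_set [set z | X z /\ z < x].
      by apply: sub_finite_set fX => z [].
    have [p [[Xp px] gp]] := fin_greatest fP (ex_intro _ z0 (conj Xz0 z0x)).
    right; exists p; split => // z pz zx.
    move=> /Achar [[b [c [[Bb [Cc hbc]] [bz zc]]]]|[m [[Bm [nCm [Xm gm]]] mz]]].
    * have bp : b <= p := gp b (conj (or_introl Bb) (le_lt_trans bz zx)).
      have xc : x <= c.
        case: (leP x c) => // cx; exfalso.
        exact: ltF (lt_le_trans pz zc) (gp c (conj (or_intror Cc) cx)).
      case: hbc => [ebc|[[_ [_ [_ hs]]] [nCb nBc]]].
        by move: bp; rewrite ebc; apply: ltF (lt_le_trans pz zc).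
      have cx := hs x (or_introl Bx) (le_lt_trans bp px).
      by apply: nBc; rewrite (le_antiP xc cx).
    * exact: ltF (le_lt_trans mz zx) (gm x (or_introl Bx)).
  + have := o_bot x; rewrite le_eqVlt => /orP [/eqP <-|ox]; first by left.
    right; exists o; split => // z oz zx.
    move=> /Achar [[b [c [[Bb _] [bz zc]]]]|[m [[Bm _] mz]]].
    * by apply: no; exists b; split; [left|exact: le_lt_trans bz zx].
    * by apply: no; exists m; split; [left|exact: le_lt_trans mz zx].
- move=> /rends_char [/Achar Ax [y [xy gap]]].
  case: Ax => [[b [c [[Bb [Cc hbc]] [bx xc]]]]|[m [[Bm gm] mx]]].
  + move: xc; rewrite le_eqVlt => /orP [/eqP -> //|xc]; exfalso.
    have [w [xw [wy wc]]] := dense2r xy xc.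
    apply: (gap w xw wy); apply: (inA_int b c) => //; last exact: ltW wc.
    exact: le_trans bx (ltW xw).
  + exfalso; have [w [xw wy]] := dense _ _ xy.
    apply: (gap w xw wy); apply: (inA_inf m) => //; exact: le_trans mx (ltW xw).
- move=> Cx; apply/rends_char; split; first exact: memC.
  case: (pselect (exists z, X z /\ x < z)) => [[z0 [Xz0 xz0]]|no].
  + have fQ : finite_set [set z | X z /\ x < z].
      by apply: sub_finite_set fX => z [].
    have [q [[Xq xq] lq]] := fin_least fQ (ex_intro _ z0 (conj Xz0 xz0)).
    exists q; split => // z xz zq.
    move=> /Achar [[b [c [[Bb [Cc hbc]] [bz zc]]]]|[m [[Bm [nCm [Xm gm]]] mz]]].
    * have qc : q <= c := lq c (conj (or_intror Cc) (lt_le_trans xz zc)).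
      have bx : b <= x.
        case: (leP b x) => // xb; exfalso.
        exact: ltF (le_lt_trans bz zq) (lq b (conj (or_introl Bb) xb)).
      case: hbc => [ebc|[[_ [_ [_ hs]]] [nCb nBc]]].
        by move: bx; rewrite ebc; apply: ltF (lt_le_trans xz zc).
      move: bx; rewrite le_eqVlt => /orP [/eqP ebx|bx].
        by apply: nCb; rewrite ebx.
      exact: ltF (lt_le_trans xz zc) (hs x (or_intror Cx) bx).
    * exact: ltF (le_lt_trans mz zq) (gm q Xq).
  + have [y xy] := no_top x; exists y; split => // z xz zy.
    move=> /Achar [[b [c [[_ [Cc _]] [bz zc]]]]|[m [[Bm [nCm [Xm gm]]] mz]]].
    * by apply: no; exists c; split; [right|exact: lt_le_trans xz zc].
    * have := gm x (or_intror Cx); rewrite le_eqVlt => /orP [/eqP exm|xm].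
        by apply: nCm; rewrite -exm.
      by apply: no; exists m.
Qed.

End Aux.

Theorem lemma6p1 (d : Order.disp_t) (I : orderType d) (o : I)
  (o_bot : forall x : I, o <= x)
  (dense : forall x y : I, x < y -> exists z, x < z /\ z < y)
  (no_top : forall x : I, exists y, x < y)
  (B C : set I) (finB : finite_set B) (finC : finite_set C) :
  (exists A : set I, is_fci A /\ A !=set0 /\ lends A = B /\ rends A = C) <->
  (B !=set0 /\ setmin (B `|` C) `<=` B /\
   ((setmax (B `|` C) `<=` C /\ ips (B `|` C) (C `\` B) = B `\` C) \/
    (setmax (B `|` C) `<=` B `\` C /\
     ips (B `|` C) (C `\` B) `|` setmax (B `|` C) = B `\` C))).
Proof.
split.
- move=> [A [[s ->] [ne [<- <-]]]].
  exact: (dir1 o o_bot dense no_top s _ _ (lends_char o o_bot dense no_top s)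
            (rends_char o o_bot dense no_top s) ne).
- move=> H; exact: (dir2 o o_bot dense no_top B C finB finC H).
Qed.
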